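(* Let $\mathbf{\Pi}=\langle\mathit{PF},\Pi\rangle$ be a multi-valued probabilistic program such that $\mathrm{SM}''[\mathbf{\Pi}]$ is not empty and $M_{\mathbf{\Pi}}(c=v)>0$ for every probabilistic constant $c$ and every $v\in\mathrm{Dom}(c)$. Then for every interpretation $I$, $I\in\mathrm{SM}'[T(\mathbf{\Pi})]$ if and only if $I\in\mathrm{SM}''[\mathbf{\Pi}]$.
   Context: Stable model semantics: a rule is $A\leftarrow B\wedge N$ ($A$ a possibly empty disjunction of atoms, $B$ a conjunction of atoms, $N$ a formula with every atom occurrence under negation); the reduct $\Pi^I$ of a ground program keeps $A\leftarrow B$ for rules with $I\models N$; $I$ (a set of atoms) is a stable model if it is a minimal model of $\Pi^I$. An $\mathrm{LP}^{\mathrm{MLN}}$ program $\Pi$ is a finite set of weighted rules $w:R$, $w$ real (soft) or the symbol $\alpha$ (hard); $\Pi_I=\{w:R\in\Pi\mid I\models R\}$; $\overline{\cdot}$ drops weights. $\mathrm{SM}'[\Pi]$ is the set of $I$ that are stable models of $\overline{\Pi_I}$ and satisfy $\overline{\Pi^{\rm hard}}$ (the unweighted hard rules). Multi-valued signature: constants $c$ with finite domains $\mathrm{Dom}(c)$; atoms $c=v$, $v\in\mathrm{Dom}(c)$; constants are probabilistic or regular. A multi-valued probabilistic program $\mathbf{\Pi}=\langle\mathit{PF},\Pi\rangle$: $\mathit{PF}$ has, for each probabilistic constant $c$, one declaration $p_1:c=v_1\mid\dots\mid p_n:c=v_n$ ($\{v_i\}=\mathrm{Dom}(c)$ distinct,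 $p_i\in[0,1]$, $\sum p_i=1$), and $M_{\mathbf{\Pi}}(c=v_i)=p_i$; $\Pi$ is a set of rules whose heads contain no atom of a probabilistic constant. $T(\mathbf{\Pi})$ is the $\mathrm{LP}^{\mathrm{MLN}}$ program containing: $\ln(p_i):c=v_i$ if $0<p_i<1$, $\alpha:c=v_i$ if $p_i=1$, $\alpha:\bot\leftarrow c=v_i$ if $p_i=0$; $\alpha:R$ for $R\in\Pi$; $\alpha:\bot\leftarrow c=v_1\wedge c=v_2$ for every constant $c$ and distinct $v_1,v_2\in\mathrm{Dom}(c)$; $\alpha:\bot\leftarrow\neg\bigvee_{v\in\mathrm{Dom}(c)}c=v$ for every probabilistic $c$. $I$ is consistent if it satisfies the last two kinds of constraints; $\mathit{TC}(I)=\{c=v\in I\mid c$ probabilistic$\}$; $\mathrm{SM}''[\mathbf{\Pi}]$ is the set of consistent $I$ that are stable models of $\Pi\cup\mathit{TC}(I)$. *)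

(* Defs.v *)
From Stdlib Require Import Reals.
From HB Require Import structures.
From mathcomp Require Import all_boot.

Set Implicit Arguments.
Unset Strict Implicit.
Unset Printing Implicit Defensive.

Section Syntax.
Variable atom : finType.

Inductive formula : Type :=
| FAtom of atom
| FBot
| FTop
| FNeg of formula
| FAnd of formula & formula
| FOr of formula & formula
| FImp of formula & formula.

Fixpoint fsat (I : {set atom}) (f : formula) : bool :=
  match f with
  | FAtom a => a \in I
  | FBot => false
  | FTop => true
  | FNeg g => ~~ fsat I g
  | FAnd g h => fsat I g && fsat I h
  | FOr g h => fsat I g || fsat I h
  | FImp g h => fsat I g ==> fsat I h
  end.

Fixpoint neg_only (f : formula) : bool :=
  match f with
  | FAtom _ => false
  | FBot | FTop | FNeg _ => true
  | FAnd g h | FOr g h | FImp g h => neg_only g && neg_only h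
  end.

(* rule  A <- B /\ N : head = disjunction A (possibly empty),
   pbody = conjunction B of atoms, nbody = N *)
Record rule : Type := Rule { head : seq atom; pbody : seq atom; nbody : formula }.

Definition rsat (I : {set atom}) (r : rule) : bool :=
  (all (fun a => a \in I) (pbody r) && fsat I (nbody r)) ==>
  has (fun a => a \in I) (head r).

Definition models (I : {set atom}) (P : seq rule) : bool := all (rsat I) P.

Definition reduct (P : seq rule) (I : {set atom}) : seq rule :=
  [seq Rule (head r) (pbody r) FTop | r <- P & fsat I (nbody r)].

Definition stable (P : seq rule) (I : {set atom}) : bool :=
  models I (reduct P I) &&
  [forall J : {set atom}, (J \proper I) ==> ~~ models J (reduct P I)].

Definition fact (a : atom) : rule := Rule [:: a] [::] FTop.

Inductive weight : Type := Soft of R | Hard.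

Definition is_hard (w : weight) : bool := if w is Hard then true else false.

Definition wprog := seq (weight * rule).

Definition unweight (P : wprog) : seq rule := map snd P.

Definition sat_part (P : wprog) (I : {set atom}) : wprog :=
  [seq wr <- P | rsat I wr.2].

Definition hard_part (P : wprog) : wprog := [seq wr <- P | is_hard wr.1].

Definition SM' (P : wprog) (I : {set atom}) : bool :=
  stable (unweight (sat_part P I)) I && models I (unweight (hard_part P)).

End Syntax.

Arguments FBot {atom}.
Arguments FTop {atom}.

Section MV.
Variables (C : finType) (D : C -> finType).

(* atoms c = v with v in Dom(c) = D c *)
Definition mvatom : finType := {c : C & D c}.
Definition cv (c : C) (v : D c) : mvatom := existT _ c v.

(* <PF, Pi>: prob c says whether constant c is probabilistic;
   pf c v is the probability p attached to c = v in the declaration of c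
   (only meaningful for probabilistic c); rules is Pi. *)
Record mvprog : Type := MVProg {
  prob : C -> bool;
  pf : forall c : C, D c -> R;
  rules : seq (rule mvatom)
}.
Arguments pf : clear implicits.

Definition mvprog_wf (P : mvprog) : Prop :=
  (forall c, prob P c ->
     (forall v, Rle R0 (pf P c v) /\ Rle (pf P c v) R1) /\
     \big[Rplus/R0]_(v : D c) pf P c v = R1) /\
  all (fun r => all (fun a : mvatom => ~~ prob P (tag a)) (head r)
                && neg_only (nbody r)) (rules P).

Definition M (P : mvprog) (c : C) (v : D c) : R := pf P c v.

(* the weighted rule(s) of T(Pi) generated by p : c = v *)
Definition pf_wrules (p : R) (a : mvatom) : wprog mvatom :=
  match Rlt_dec R0 p, Rlt_dec p R1 with
  | left _, left _ => [:: (Soft (ln p), fact a)]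
  | _, _ =>
    match Req_EM_T p R1 with
    | left _ => [:: (Hard, fact a)]
    | right _ =>
      match Req_EM_T p R0 with
      | left _ => [:: (Hard, Rule [::] [:: a] FTop)]
      | right _ => [::]
      end
    end
  end.

Definition pf_part (P : mvprog) : wprog mvatom :=
  flatten [seq flatten [seq pf_wrules (pf P c v) (cv v) | v <- enum (D c)]
          | c <- enum C & prob P c].

Definition uniq_rules : seq (rule mvatom) :=
  flatten [seq [seq Rule [::] [:: cv vv.1; cv vv.2] FTop
               | vv <- [seq (v1, v2) | v1 <- enum (D c), v2 <- enum (D c)]
               & vv.1 != vv.2]
          | c <- enum C].

Definition bigor (c : C) : formula mvatom :=
  foldr (fun f g => FOr f g) FBot [seq FAtom (cv v) | v <- enum (D c)].

Definition exist_rules (P : mvprog) : seq (rule mvatom) :=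
  [seq Rule [::] [::] (FNeg (bigor c)) | c <- enum C & prob P c].

Definition hardify (P : seq (rule mvatom)) : wprog mvatom :=
  [seq (Hard, r) | r <- P].

Definition T (P : mvprog) : wprog mvatom :=
  pf_part P ++ hardify (rules P) ++ hardify uniq_rules ++ hardify (exist_rules P).

Definition consistent (P : mvprog) (I : {set mvatom}) : bool :=
  models I (uniq_rules ++ exist_rules P).

Definition TC (P : mvprog) (I : {set mvatom}) : seq (rule mvatom) :=
  [seq fact a | a <- enum I & prob P (tag a)].

Definition SM'' (P : mvprog) (I : {set mvatom}) : bool :=
  consistent P I && stable (rules P ++ TC P I) I.

End MV.

Arguments pf {C D} m c v.
Arguments M {C D} P c v.

(* Main.v *)
Require Import Defs.
From Stdlib Require Import Reals.
From HB Require Import structures.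
From mathcomp Require Import all_boot.
From Stdlib Require Import Lra.

Set Implicit Arguments.
Unset Strict Implicit.
Unset Printing Implicit Defensive.

HB.instance Definition _ := SemiGroup.isComLaw.Build R Rplus (fun a b c => esym (Rplus_assoc a b c)) Rplus_comm.

Lemma sum_two (T : finType) (f : T -> R) (x y : T) :
  x != y -> (forall z, Rle R0 (f z)) ->
  Rle (Rplus (f x) (f y)) (\big[Rplus/R0]_(z : T) f z).
Proof.
move=> Hxy Hf.
rewrite (bigD1 x) // (bigD1 y) /=; last by rewrite eq_sym.
have : Rle R0 (\big[Rplus/R0]_(i | (i != x) && (i != y)) f i).
  apply: (big_ind (fun v => Rle R0 v)); [lra| move=> a b; lra | by []].
rewrite /=; lra.
Qed.

Lemma all_flatten (T : Type) (p : pred T) (ss : seq (seq T)) :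
  all p (flatten ss) = all (all p) ss.
Proof. by elim: ss => //= s ss IH; rewrite all_cat IH. Qed.

Lemma all3 (T : Type) (p q r : pred T) s :
  all p s -> all q s -> (forall x, p x -> q x -> r x) -> all r s.
Proof. by move=> Hp Hq H; elim: s Hp Hq => //= x s IH /andP[? ?] /andP[? ?]; rewrite H // IH. Qed.

Section Aux.
Variable atom : finType.
Implicit Types (I J : {set atom}) (r : rule atom) (P : seq (rule atom)).

Definition g I J r := fsat I (nbody r) ==>
  (all (fun a => a \in J) (pbody r) ==> has (fun a => a \in J) (Defs.head r)).

Lemma models_reduct I J P : models J (reduct P I) = all (g I J) P.
Proof.
elim: P => //= r P IH. rewrite /models /reduct /= in IH *.
case: ifP => Hn /=; rewrite IH /g Hn /rsat /= ?andbT //.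
Qed.

Lemma g_self I r : g I I r = rsat I r.
Proof. rewrite /g /rsat; by case: (fsat _ _); case: (all _ _); case: (has _ _). Qed.

Lemma models_reduct_self I P : models I (reduct P I) = models I P.
Proof. by rewrite models_reduct; apply: eq_all => r; rewrite g_self. Qed.

Lemma stable_ext P1 P2 I :
  (forall J, J \subset I -> all (g I J) P1 = all (g I J) P2) ->
  stable P1 I = stable P2 I.
Proof.
move=> H; rewrite /stable; congr andb; first by rewrite !models_reduct H ?subxx.
apply: eq_forallb => J. case HJ: (J \proper I) => //=.
by rewrite !models_reduct H // proper_sub.
Qed.

Lemma g_constr I J r : Defs.head r = [::] -> rsat I r -> J \subset I -> g I J r.
Proof.
move=> Hh; rewrite /rsat /g Hh /= => Hr HJ.
have Hs : all (fun a => a \in J) (pbody r) -> all (fun a => a \in I) (pbody r).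
  by apply: sub_all => a /(subsetP HJ).
move: Hr Hs; case: (fsat _ _); case: (all _ (pbody r)); case: (all _ (pbody r)) => //=.
by move=> _ H; have := H erefl.
Qed.

Lemma uw_sat_cat (s1 s2 : wprog atom) I :
  unweight (sat_part (s1 ++ s2) I) = unweight (sat_part s1 I) ++ unweight (sat_part s2 I).
Proof. by rewrite /unweight /sat_part filter_cat map_cat. Qed.

Lemma uw_hard_cat (s1 s2 : wprog atom) :
  unweight (hard_part (s1 ++ s2)) = unweight (hard_part s1) ++ unweight (hard_part s2).
Proof. by rewrite /unweight /hard_part filter_cat map_cat. Qed.

Lemma uw_sat_flatten (ss : seq (wprog atom)) I :
  unweight (sat_part (flatten ss) I) = flatten (map (fun s => unweight (sat_part s I)) ss).
Proof. by elim: ss => //= s ss IH; rewrite uw_sat_cat IH. Qed.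

Lemma uw_hard_flatten (ss : seq (wprog atom)) :
  unweight (hard_part (flatten ss)) = flatten (map (fun s => unweight (hard_part s)) ss).
Proof. by elim: ss => //= s ss IH; rewrite uw_hard_cat IH. Qed.

End Aux.

Section MVAux.
Variables (C : finType) (D : C -> finType).
Implicit Types (I J : {set mvatom D}).

Lemma uw_sat_hardify (s : seq (rule (mvatom D))) I :
  unweight (sat_part (hardify s) I) = filter (rsat I) s.
Proof.
elim: s => //= r s IH; rewrite /sat_part /unweight /= in IH *.
by case: ifP => _ //=; rewrite IH.
Qed.

Lemma uw_hard_hardify (s : seq (rule (mvatom D))) :
  unweight (hard_part (hardify s)) = s.
Proof. by elim: s => //= r s IH; rewrite /hard_part /unweight /= in IH *; rewrite IH. Qed.

Lemma pfw_hard p (a : mvatom D) I : Rlt R0 p -> Rle p R1 ->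
  (models I (unweight (hard_part (pf_wrules p a))) <-> (p = R1 -> a \in I)).
Proof.
move=> H0 H1; rewrite /pf_wrules.
case: (Rlt_dec R0 p) => [h0|h0]; last lra.
case: (Rlt_dec p R1) => [h1|h1].
  by split => // _ E; lra.
case: (Req_EM_T p R1) => [E|E]; last lra.
rewrite /models /rsat /=; split; first by move=> /andP[] /orP[] // ? _.
by move=> /(_ E) ->.
Qed.

Lemma pfw_sat p (a : mvatom D) I J : Rlt R0 p -> Rle p R1 ->
  (p = R1 -> a \in I) ->
  all (g I J) (unweight (sat_part (pf_wrules p a) I)) = (a \in I) ==> (a \in J).
Proof.
move=> H0 H1 H; rewrite /pf_wrules.
case: (Rlt_dec R0 p) => [h0|h0]; last lra.
case: (Rlt_dec p R1) => [h1|h1].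
  rewrite /sat_part /unweight /= /rsat /= orbF.
  by case: (a \in I) => //=; rewrite /g /= orbF andbT.
case: (Req_EM_T p R1) => [E|E]; last lra.
rewrite /sat_part /unweight /= /rsat /= orbF (H E) /= /g /=.
by rewrite orbF andbT.
Qed.

Lemma fsat_bigor I (c : C) : fsat I (@bigor C D c) = has (fun v => cv v \in I) (enum (D c)).
Proof.
rewrite /bigor; elim: (enum (D c)) => //= v s IH; by rewrite IH.
Qed.

End MVAux.

Section Main.
Variables (C : finType) (D : C -> finType) (P : mvprog D).
Hypothesis wf : mvprog_wf P.
Hypothesis pos : forall (c : C) (v : D c), prob P c -> Rlt R0 (M P c v).
Implicit Types (I J : {set mvatom D}).

Definition H1 I := forall c (v : D c), prob P c -> pf P c v = R1 -> cv v \in I.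

Lemma pf_hard I : models I (unweight (hard_part (pf_part P))) <-> H1 I.
Proof.
rewrite /pf_part uw_hard_flatten /models all_flatten !all_map all_filter.
split.
- move=> /allP Hc c v Hp E.
  have := Hc c (mem_enum _ _); rewrite /= Hp /= uw_hard_flatten all_flatten all_map.
  rewrite all_map => /allP /(_ v (mem_enum _ _)) /=.
  have [Hb _] := wf.
  have [_ Hle] := (proj1 (Hb c Hp)) v.
  by move/(pfw_hard _ _ (pos v Hp) Hle); apply.
- move=> H; apply/allP => c _ /=; apply/implyP => Hp.
  rewrite uw_hard_flatten all_flatten all_map all_map; apply/allP => v _ /=.
  have [Hb _] := wf.
  have [_ Hle] := (proj1 (Hb c Hp)) v.
  apply/(pfw_hard _ _ (pos v Hp) Hle) => E; exact: H.
Qed.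

Lemma pf_sat I J : H1 I ->
  all (g I J) (unweight (sat_part (pf_part P) I)) =
  [forall a : mvatom D, ((a \in I) && prob P (tag a)) ==> (a \in J)].
Proof.
move=> HI.
rewrite /pf_part uw_sat_flatten all_flatten !all_map all_filter.
apply/allP/forallP.
- move=> Hc [c v] /=; apply/implyP => /andP[Ha Hp].
  have := Hc c (mem_enum _ _); rewrite /= Hp /= uw_sat_flatten all_flatten all_map all_map.
  move=> /allP /(_ v (mem_enum _ _)) /=.
  have [Hb _] := wf.
  have [_ Hle] := (proj1 (Hb c Hp)) v.
  rewrite (pfw_sat J (pos v Hp) Hle); last by move=> E; apply: HI.
  by rewrite /cv Ha.
- move=> H c _ /=; apply/implyP => Hp.
  rewrite uw_sat_flatten all_flatten all_map all_map; apply/allP => v _ /=.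
  have [Hb _] := wf.
  have [_ Hle] := (proj1 (Hb c Hp)) v.
  rewrite (pfw_sat J (pos v Hp) Hle); last by move=> E; apply: HI.
  by have := H (cv v); rewrite /= Hp andbT.
Qed.

Lemma tc_sat I J :
  all (g I J) (TC P I) =
  [forall a : mvatom D, ((a \in I) && prob P (tag a)) ==> (a \in J)].
Proof.
rewrite /TC all_map all_filter; apply/allP/forallP.
- move=> H a; apply/implyP => /andP[Ha Hp].
  have := H a; rewrite mem_enum => /(_ Ha) /=; by rewrite Hp /g /= orbF.
- move=> H a; rewrite mem_enum => Ha /=; apply/implyP => Hp.
  by have := H a; rewrite Ha Hp /g /= orbF.
Qed.

Lemma heads_nil : all (fun r => nilp (Defs.head r)) (uniq_rules D ++ exist_rules P).
Proof.
rewrite all_cat /uniq_rules /exist_rules all_flatten all_map all_map all_filter.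
apply/andP; split; apply/allP => c _ //=; last by apply/implyP.
by rewrite all_map all_filter; apply/allP => x _; apply/implyP.
Qed.

Lemma key I : consistent P I -> models I (rules P) -> H1 I ->
  models I (unweight (hard_part (T P))) /\
  stable (unweight (sat_part (T P) I)) I = stable (rules P ++ TC P I) I.
Proof.
move=> Hc HA HI; split.
  rewrite /T !uw_hard_cat !uw_hard_hardify /models !all_cat.
  move: Hc; rewrite /consistent /models all_cat => /andP[-> ->].
  move: HA; rewrite /models => ->; rewrite !andbT; have := proj2 (pf_hard I) HI; rewrite /models; exact.
apply: stable_ext => J HJ.
rewrite /T !uw_sat_cat !uw_sat_hardify !all_cat pf_sat // tc_sat.
move: (HA) => /all_filterP ->.
have Hc' := Hc; rewrite /consistent /models in Hc'.
move: Hc' heads_nil; rewrite !all_cat => /andP[H1' H2'] /andP[N1 N2].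
rewrite (all_filterP H1') (all_filterP H2').
have -> : all (g I J) (uniq_rules D) by apply: (all3 N1 H1') => r /nilP Hn Hr; apply: g_constr.
have -> : all (g I J) (exist_rules P) by apply: (all3 N2 H2') => r /nilP Hn Hr; apply: g_constr.
by rewrite !andbT andbC.
Qed.

Lemma cons_H1 I : consistent P I -> H1 I.
Proof.
move=> Hc c v Hp E.
move: Hc; rewrite /consistent /models all_cat => /andP[_].
rewrite /exist_rules all_map all_filter => /allP /(_ c (mem_enum _ _)) /=.
rewrite Hp /rsat /= fsat_bigor.
case: (has _ _) /hasP => [[v' _ Hv'] _|]; last by [].
case: (eqVneq v v') => [-> //|Hne].
have [Hb _] := wf.
have [Hr Hs] := Hb c Hp.
have := sum_two (f:=pf P c) Hne (fun z => proj1 (Hr z)).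
rewrite Hs E.
have := pos v' Hp; rewrite /M; lra.
Qed.

End Main.

Theorem lemma7 (C : finType) (D : C -> finType) (P : mvprog D) :
  mvprog_wf P ->
  (exists I : {set mvatom D}, SM'' P I) ->
  (forall (c : C) (v : D c), prob P c -> Rlt R0 (M P c v)) ->
  forall I : {set mvatom D}, SM' (T P) I <-> SM'' P I.
Proof.
move=> wf [I0 _] pos I; split.
- rewrite /SM' => /andP[Hst Hh].
  have Hh' := Hh.
  rewrite /T !uw_hard_cat !uw_hard_hardify in Hh'.
  move: Hh'; rewrite {1}/models !all_cat => /and4P[Hpf HA Hu He].
  have Hc : consistent P I by rewrite /consistent /models all_cat Hu He.
  have HI : H1 P I by apply/(pf_hard wf pos I).
  have [_ E] := key wf pos Hc HA HI.
  by rewrite /SM'' Hc /= -E.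
- rewrite /SM'' => /andP[Hc Hst].
  have HA : models I (rules P).
    move: (Hst) => /andP[Hm _]; move: Hm.
    by rewrite models_reduct_self /models all_cat => /andP[].
  have HI := cons_H1 wf pos Hc.
  have [Hh E] := key wf pos Hc HA HI.
  by rewrite /SM' E Hst Hh.
Qed.
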